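(* Let $n\ge1$, let $S=\{a_1^{r_1},\dots,a_m^{r_m}\}$ be a multiset of elements of $[n]$ with $a_1<\dots<a_m$ and multiplicities $r_i\ge1$, and let $T\subseteq[n]$ be a set with $|T|=|S|=r_1+\dots+r_m$. For $1\le i\le m$ let $h(i)=|\{j\in T: j>a_i\}|-|\{j\in S: j>a_i\}|$ (elements of $S$ counted with multiplicity). Let $LP_n(S,T)$ be the set of linked partitions $\pi$ of $[n]$ with $\mathrm{left}(\pi)=S$ and $\mathrm{right}(\pi)=T$. Then $$\sum_{\pi\in LP_n(S,T)}x^{cr_2(\pi)}y^{ne_2(\pi)}=\sum_{\pi\in LP_n(S,T)}x^{ne_2(\pi)}y^{cr_2(\pi)}=\prod_{i=1}^m y^{r_ih(i)-r_i^2}\left.{h(i)\brack r_i}_q\right|_{q=x/y},$$ where ${a\brack b}_q=\frac{(q^a-1)(q^a-q)\cdots(q^a-q^{b-1})}{(q^b-1)(q^b-q)\cdots(q^b-q^{b-1})}$ is the $q$-binomial coefficient (equal to $0$ when $0\le a<b$).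
   Context: Two finite sets of integers $E,F$ are nearly disjoint if for every $i\in E\cap F$ either ($i=\min(E)$, $|E|>1$, $i\ne\min(F)$) or ($i=\min(F)$, $|F|>1$, $i\ne\min(E)$). A linked partition of $[n]$ is a set of nonempty subsets (blocks) of $[n]$ with union $[n]$, any two distinct blocks nearly disjoint. The arcs of a linked partition $\pi$ are the pairs $(i_1,j)$ where $i_1=\min(E)$ and $j\in E\setminus\{i_1\}$ for some block $E$ with $|E|\ge2$. $\mathrm{left}(\pi)$ is the multiset of left endpoints $i_1$ of arcs (one copy per arc) and $\mathrm{right}(\pi)$ the multiset (in fact a set) of right endpoints $j$ of arcs. Two arcs $(i_1,j_1),(i_2,j_2)$ form a 2-crossing if $i_1<i_2<j_1<j_2$ and a 2-nesting if $i_1<i_2<j_2<j_1$; $cr_2(\pi)$ and $ne_2(\pi)$ denote the numbers of 2-crossings and 2-nestings of $\pi$. *)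

(* Defs.v *)
(* The ground set [n] = {1,...,n} is represented literally
   inside 'I_n.+1 as the nonzero ordinals. *)
From mathcomp Require Import all_boot all_order all_algebra.
Set Implicit Arguments. Unset Strict Implicit. Unset Printing Implicit Defensive.
Import Order.TTheory GRing.Theory Num.Theory.

Section LinkedPartitions.
Variable n : nat.
Local Notation V := ('I_n.+1).

Definition ground : {set V} := [set i : V | i != ord0].

Definition ismin (i : V) (E : {set V}) : bool :=
  (i \in E) && [forall j in E, (i <= j)%N].

Definition nearly_disjoint (E F : {set V}) : bool :=
  [forall i in E :&: F,
     (ismin i E && (1 < #|E|)%N && ~~ ismin i F) ||
     (ismin i F && (1 < #|F|)%N && ~~ ismin i E)].

Definition linked_partition (P : {set {set V}}) : bool :=
  [&& set0 \notin P,
      \bigcup_(E in P) E == ground &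
      [forall E in P, forall F in P, (E != F) ==> nearly_disjoint E F]].

Definition arcs (P : {set {set V}}) : {set V * V} :=
  [set p : V * V | [exists E in P, [&& ismin p.1 E, p.2 \in E & p.2 != p.1]]].

(* multiplicity of i in left(pi) (one copy per arc) *)
Definition left_mult (P : {set {set V}}) (i : V) : nat :=
  #|[set p in arcs P | p.1 == i]|.

Definition right_mult (P : {set {set V}}) (j : V) : nat :=
  #|[set p in arcs P | p.2 == j]|.

Definition cr2 (P : {set {set V}}) : nat :=
  #|[set pq : (V * V) * (V * V) | [&& pq.1 \in arcs P, pq.2 \in arcs P &
      [&& (pq.1.1 < pq.2.1)%N, (pq.2.1 < pq.1.2)%N & (pq.1.2 < pq.2.2)%N]]]|.

Definition ne2 (P : {set {set V}}) : nat :=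
  #|[set pq : (V * V) * (V * V) | [&& pq.1 \in arcs P, pq.2 \in arcs P &
      [&& (pq.1.1 < pq.2.1)%N, (pq.2.1 < pq.2.2)%N & (pq.2.2 < pq.1.2)%N]]]|.

Definition LP (S : {ffun V -> nat}) (T : {set V}) (P : {set {set V}}) : bool :=
  [&& linked_partition P,
      [forall i, left_mult P i == S i] &
      [forall j, right_mult P j == (j \in T)]].

Definition hfun (S : {ffun V -> nat}) (T : {set V}) (a : V) : int :=
  (#|[set j in T | (a < j)%N]|)%:Z - (\sum_(j : V | (a < j)%N) S j)%:Z.

End LinkedPartitions.

(* q-binomial coefficient [a brack b]_q given by the product formula
   (which is 0 when 0 <= a < b since the numerator has the factor q^a - q^a);
   for negative a we use the convention 0 (irrelevant). *)
Definition qbinom (R : fieldType) (a : int) (b : nat) (q : R) : R :=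
  match a with
  | Posz a' => (\prod_(k < b) (q ^+ a' - q ^+ k)) / (\prod_(k < b) (q ^+ b - q ^+ k))
  | Negz _ => 0
  end.

(* Main.v *)
Require Import Defs.
From mathcomp Require Import all_boot all_order all_algebra.
From mathcomp Require Import zify ring.
Set Implicit Arguments. Unset Strict Implicit. Unset Printing Implicit Defensive.
Import Order.TTheory GRing.Theory Num.Theory.

(* Proof: reduce linked partitions to their arc sets (a
   bijection), then induct on the largest left endpoint; the local factor is
   a q-binomial generating function for inversions. *)

Section PartA.
Local Open Scope ring_scope.

Section Alg.
Variable R : fieldType.

Definition Nq (q : R) (h r : nat) : R := \prod_(k < r) (q ^+ h - q ^+ k).
Definition Cq (q : R) (h r : nat) : R := Nq q h r / Nq q r r.

Lemma NqS q h r : Nq q h.+1 r.+1 = (q ^+ h.+1 - 1) * q ^+ r * Nq q h r.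
Proof.
rewrite /Nq big_ord_recl expr0 -mulrA; congr (_ * _).
rewrite (eq_bigr (fun i : 'I_r => q * (q ^+ h - q ^+ i))); last first.
  by move=> i _; rewrite /bump /= !exprS mulrBr.
by rewrite big_split /= prodr_const card_ord.
Qed.

Lemma NqrS q h r : Nq q h r.+1 = Nq q h r * (q ^+ h - q ^+ r).
Proof. by rewrite /Nq big_ord_recr. Qed.

Lemma Nq0 q h r : (h < r)%N -> Nq q h r = 0.
Proof. by move=> hr; rewrite /Nq (bigD1 (Ordinal hr)) //= subrr mul0r. Qed.


Lemma Nqrr_neq0 q : q != 0 -> (forall k, (0 < k)%N -> q ^+ k != 1) ->
  forall r, Nq q r r != 0.
Proof.
move=> q0 qk r; apply/prodf_neq0 => i _.
have [s E] : exists s, r = (i + s.+1)%N by exists (r - i.+1)%N; have := ltn_ord i; lia.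
rewrite [in q ^+ r]E exprD -{2}(mulr1 (q ^+ i)) -mulrBr mulf_neq0 ?expf_neq0 //.
by rewrite subr_eq0 qk.
Qed.

Lemma Cq_h0 q h : Cq q h 0 = 1.
Proof. by rewrite /Cq /Nq !big_ord0 divr1. Qed.

Lemma Cq0 q h r : (h < r)%N -> Cq q h r = 0.
Proof. by move=> hr; rewrite /Cq Nq0 ?mul0r. Qed.

Lemma Cq_pascal q h r : q != 0 -> (forall k, (0 < k)%N -> q ^+ k != 1) ->
  (r <= h)%N -> Cq q h.+1 r.+1 = q ^+ (h - r) * Cq q h r + Cq q h r.+1.
Proof.
move=> q0 qk rh; have [s ->] : exists s, h = (r + s)%N by exists (h - r)%N; lia.
have -> : (r + s - r = s)%N by lia.
have D0 := Nqrr_neq0 q0 qk r.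
have E0 : q ^+ r.+1 - 1 != 0 by rewrite subr_eq0 qk.
have Q0 : q ^+ r != 0 by rewrite expf_neq0.
rewrite /Cq !NqS NqrS.
move: E0; rewrite !exprS exprD => E0.
field.
by rewrite D0 Q0 E0.
Qed.


Definition Kf (x y : R) (h r : nat) : R :=
  if (r <= h)%N then y ^+ (r * (h - r)) * Cq (x / y) h r else 0.

Lemma Kf_h0 x y h : Kf x y h 0 = 1.
Proof. by rewrite /Kf leq0n mul0n expr0 mul1r Cq_h0. Qed.

Lemma Kf_0r x y r : Kf x y 0 r.+1 = 0.
Proof. by []. Qed.

Section KfH.
Variables x y : R.
Hypotheses (x0 : x != 0) (y0 : y != 0)
  (qk : forall k, (0 < k)%N -> (x / y) ^+ k != 1).

Let q0 : x / y != 0. Proof. by rewrite mulf_neq0 ?invr_eq0. Qed.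

Lemma Kf_rec h r :
  Kf x y h.+1 r.+1 = x ^+ (h - r) * Kf x y h r + y ^+ r.+1 * Kf x y h r.+1.
Proof.
rewrite /Kf ltnS.
case: (leqP r h) => rh; last first.
  have h2 : (r.+1 <= h)%N = false by lia.
  by rewrite h2 /= !mulr0 addr0.
rewrite (Cq_pascal q0 qk rh).
have [s ->] : exists s, h = (r + s)%N by exists (h - r)%N; lia.
have -> : (r + s - r = s)%N by lia.
case: s => [|s].
  rewrite addn0 ltnn (Cq0 _ (ltnSn r)).
  by rewrite subnn !muln0 !expr0; ring.
have -> : (r < r + s.+1)%N = true by lia.
have -> : (r + s.+1 - r.+1 = s)%N by lia.
have -> : ((r + s.+1).+1 - r.+1 = s.+1)%N by lia.
rewrite expr_div_n.
have -> : (r.+1 * s.+1 = r * s + r + s + 1)%N by lia.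
have -> : (r * s.+1 = r * s + r)%N by lia.
have -> : (r.+1 * s = r * s + s)%N by lia.
by rewrite !exprD !exprS; field; rewrite expf_neq0.
Qed.

Lemma Kf_ratio h r : (r <= h)%N ->
  Kf x y h.+1 r.+1 = (x ^+ h.+1 - y ^+ h.+1) / (x ^+ r.+1 - y ^+ r.+1) * Kf x y h r.
Proof.
move=> rh; rewrite /Kf ltnS rh.
have D0 := Nqrr_neq0 q0 qk r.
have E0 : (x / y) ^+ r.+1 - 1 != 0 by rewrite subr_eq0 qk.
have F0 : x ^+ r.+1 - y ^+ r.+1 != 0.
  move: E0; rewrite expr_div_n; apply: contra; rewrite subr_eq0 => /eqP ->.
  by rewrite divff ?subrr // expf_neq0.
rewrite /Cq !NqS.
have [s ->] : exists s, h = (r + s)%N by exists (h - r)%N; lia.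
have -> : (r + s - r = s)%N by lia.
have -> : (r.+1 + s - r.+1 = s)%N by lia.
have -> : (r.+1 * s = r * s + s)%N by lia.
move: E0 F0; rewrite !expr_div_n => E0 F0.
have Y0 : y ^+ r.+1 != 0 by rewrite expf_neq0.
have -> : y ^+ (r + s).+1 = y ^+ s * y ^+ r.+1 by rewrite -exprD; congr (_ ^+ _); lia.
rewrite !exprD.
field.
by rewrite D0 F0 Y0 !expf_neq0.
Qed.

End KfH.


Lemma qk_swap (x y : R) : x != 0 -> y != 0 ->
  (forall k, (0 < k)%N -> (x / y) ^+ k != 1) ->
  (forall k, (0 < k)%N -> (y / x) ^+ k != 1).
Proof.
move=> x0 y0 qk k k0; have := qk k k0; apply: contra => /eqP E.
have -> : x / y = (y / x)^-1 by rewrite invf_div.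
by rewrite exprVn E invr1.
Qed.

Lemma Kf_sym (x y : R) : x != 0 -> y != 0 ->
  (forall k, (0 < k)%N -> (x / y) ^+ k != 1) ->
  forall h r, Kf x y h r = Kf y x h r.
Proof.
move=> x0 y0 qk; have qk' := qk_swap x0 y0 qk.
move=> h r; elim: r h => [|r IH] h; first by rewrite !Kf_h0.
case: h => [|h]; first by rewrite !Kf_0r.
case: (leqP r h) => rh.
  rewrite (Kf_ratio x0 y0 qk rh) (Kf_ratio y0 x0 qk' rh) IH; congr (_ * _).
  by rewrite -(opprB (y ^+ h.+1)) -(opprB (y ^+ r.+1)) invrN mulrNN.
by rewrite /Kf ltnS leqNgt rh.
Qed.

Lemma Kint (x y : R) (h r : nat) :
  y ^ ((r%:Z) * (h%:Z) - (r%:Z) ^+ 2) * qbinom (Posz h) r (x / y) = Kf x y h r.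
Proof.
rewrite /Kf; case: (leqP r h) => rh.
  have -> : (r%:Z) * (h%:Z) - (r%:Z) ^+ 2 = Posz (r * (h - r)).
    by rewrite expr2 -mulrBr subzn // -PoszM.
  by [].
rewrite /qbinom.
have -> : \prod_(k < r) ((x / y) ^+ h - (x / y) ^+ k) = 0 := Nq0 _ rh.
by rewrite mul0r mulr0.
Qed.

End Alg.


Section Loc.
Variable V : finType.
Variable f : V -> nat.
Hypothesis finj : injective f.

Definition invc (O B : {set V}) : nat := (\sum_(b in O :\: B) \sum_(d in B) (f b < f d)%N)%N.
Definition coinvc (O B : {set V}) : nat := (\sum_(b in O :\: B) \sum_(d in B) (f d < f b)%N)%N.

Variable R : fieldType.

Definition Lsum (x y : R) (O : {set V}) (r : nat) : R :=
  \sum_(B : {set V} | (B \subset O) && (#|B| == r)) x ^+ invc O B * y ^+ coinvc O B.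

Lemma Lsum_r0 x y O : Lsum x y O 0 = 1.
Proof.
rewrite /Lsum (big_pred1 set0); last first.
  by move=> B; rewrite /= cards_eq0 andb_idl // => /eqP ->; rewrite sub0set.
have E1 : invc O set0 = 0%N by apply: big1 => i _; rewrite big_set0.
have E2 : coinvc O set0 = 0%N by apply: big1 => i _; rewrite big_set0.
by rewrite E1 E2 mulr1.
Qed.

Lemma Lsum_set0 x y r : Lsum x y set0 r.+1 = 0.
Proof.
rewrite /Lsum big_pred0 // => B; rewrite subset0.
by case: eqP => // ->; rewrite cards0.
Qed.

Lemma Lsum_rec x y (O : {set V}) (m : V) r : m \in O -> (forall j, j \in O -> (f j <= f m)%N) ->
  Lsum x y O r.+1 = x ^+ (#|O :\ m| - r) * Lsum x y (O :\ m) r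
                    + y ^+ r.+1 * Lsum x y (O :\ m) r.+1.
Proof.
move=> mO mmax; rewrite /Lsum (bigID (fun B : {set V} => m \in B)) /=; congr (_ + _).
  rewrite big_distrr (reindex_onto (fun B1 : {set V} => m |: B1) (fun B : {set V} => B :\ m)) /=;
    last by move=> B /andP [_ mB]; rewrite setD1K.
  apply: eq_big => B' /=.
    case mB' : (m \in B'); cbv beta.
      rewrite setU11 andbT.
      have -> : ((m |: B') :\ m == B') = false.
        by apply/negbTE; apply/eqP => E; move: mB'; rewrite -E setD11.
      by rewrite andbF (subsetD1 B' O m) mB' !andbF.
    rewrite (subsetD1 B' O m) mB' andbT subUset sub1set mO setU11 andbT setU1K ?mB' // eqxx andbT cardsU1 mB' /= add1n eqSS.
    by [].
  move=> /andP [/andP [/andP [sB /eqP cB] _] /eqP E].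
  have mB' : m \notin B' by rewrite -E setD11.
  have sB0 : B' \subset O by apply: subset_trans sB; apply: subsetUr.
  have cB' : #|B'| = r by move: cB; rewrite cardsU1 mB' add1n => [[]].
  have sB' : B' \subset O :\ m by rewrite (subsetD1 B' O m) sB0 mB'.
  have eO : O :\: (m |: B') = (O :\ m) :\: B'.
    by apply/setP => j; rewrite !inE negb_or andbA [X in X && _]andbC.
  have hinv : invc O (m |: B') = (invc (O :\ m) B' + (#|O :\ m| - r))%N.
    rewrite /invc eO (eq_bigr (fun b => 1 + \sum_(d in B') (f b < f d)%N)%N).
      rewrite big_split /= sum1_card addnC cardsD (setIidPr sB') cB' //.
    move=> b; rewrite !inE => /andP [_ /andP [bm bO]].
    rewrite big_setU1 //=; congr (_ + _)%N.
    have bm' : f b != f m by apply: contra bm => /eqP /finj ->.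
    by rewrite ltn_neqAle bm' (mmax b bO).
  have hcoinv : coinvc O (m |: B') = coinvc (O :\ m) B'.
    rewrite /coinvc eO; apply: eq_bigr => b; rewrite !inE => /andP [_ /andP [bm bO]].
    rewrite big_setU1 //=.
    by have := mmax b bO; rewrite leqNgt => /negbTE ->.
  by rewrite hinv hcoinv exprD; ring.
rewrite big_distrr /=; apply: eq_big => B.
  by rewrite (subsetD1 B O m) andbAC.
case/andP => /andP [sB /eqP cB] mB.
have eO : O :\: B = m |: ((O :\ m) :\: B).
  apply/setP => j; rewrite !inE; case: (eqVneq j m) => [->|] //=.
  by rewrite mO (negbTE mB).
have mO' : m \notin (O :\ m) :\: B by rewrite !inE eqxx /= andbF.
have hinv : invc O B = invc (O :\ m) B.
  rewrite /invc eO big_setU1 //= big1 ?add0n // => d dB.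
  by rewrite ltnNge mmax // (subsetP sB).
have hcoinv : coinvc O B = (r.+1 + coinvc (O :\ m) B)%N.
  rewrite /coinvc eO big_setU1 //=; congr (_ + _)%N.
  rewrite -cB -sum1_card; apply: eq_bigr => d dB.
  have := mmax d (subsetP sB d dB); rewrite leq_eqVlt => /orP [/eqP/finj E|->] //.
  by move: mB; rewrite -E dB.
by rewrite hinv hcoinv exprD; ring.
Qed.


Lemma Lsum_closed (x y : R) : x != 0 -> y != 0 ->
  (forall k, (0 < k)%N -> (x / y) ^+ k != 1) ->
  forall (O : {set V}) r, Lsum x y O r = Kf x y #|O| r.
Proof.
move=> x0 y0 qk O r.
move Hk : #|O| => k; elim: k O r Hk => [|k IH] O r cO.
  have -> : O = set0 by apply/eqP; rewrite -cards_eq0 cO.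
  case: r => [|r]; first by rewrite Lsum_r0 Kf_h0.
  by rewrite Lsum_set0.
have [i0 i0O] : exists i0, i0 \in O.
  by apply/set0Pn; rewrite -card_gt0 cO.
case: (arg_maxnP f i0O) => m mO0 mmax.
have mO : m \in O := mO0.
case: r => [|r]; first by rewrite Lsum_r0 Kf_h0.
have cO' : #|O :\ m| = k by move: cO; rewrite (cardsD1 m O) mO add1n => [[]].
by rewrite (Lsum_rec _ _ _ mO mmax) cO' !IH // Kf_rec.
Qed.

End Loc.

End PartA.


Section Gen.
Variable W : finType.

Lemma card_setU_pred (X Y : {set W}) (P : pred W) : [disjoint X & Y] ->
  #|[set p in X :|: Y | P p]| = (#|[set p in X | P p]| + #|[set p in Y | P p]|)%N.
Proof.
move=> dXY.
have -> : [set p in X :|: Y | P p] = [set p in X | P p] :|: [set p in Y | P p].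
  by apply/setP => p; rewrite !inE andb_orl.
rewrite cardsU; suff -> : [set p in X | P p] :&: [set p in Y | P p] = set0.
  by rewrite cards0 subn0.
apply/setP => p; rewrite !inE; move/disjoint_setI0/setP/(_ p): dXY; rewrite !inE.
by case: (p \in X); case: (p \in Y); case: (P p).
Qed.

Lemma card_pairs (A : {set W}) (c : W -> W -> bool) :
  #|[set pq : W * W | [&& pq.1 \in A, pq.2 \in A & c pq.1 pq.2]]| =
  (\sum_(p in A) \sum_(q in A) c p q)%N.
Proof.
rewrite (eq_bigr (fun p => \sum_(q in A | c p q) 1)%N); last first.
  by move=> p _; rewrite big_mkcondr; apply: eq_bigr => q _; case: (c p q).
rewrite pair_big_dep /= sum1_card cardsE; apply: eq_card => pq.
by [].
Qed.

Lemma sum_card_set (A : {set W}) (P : pred W) :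
  (\sum_(p in A | P p) 1)%N = #|[set p in A | P p]|.
Proof. by rewrite sum1_card cardsE. Qed.

Lemma bigU_disj (R : Type) (idx : R) (op : Monoid.com_law idx) (X Y : {set W}) (F : W -> R) :
  [disjoint X & Y] ->
  \big[op/idx]_(p in X :|: Y) F p = op (\big[op/idx]_(p in X) F p) (\big[op/idx]_(p in Y) F p).
Proof.
move=> d; rewrite -bigU //; apply: eq_bigl => p; by rewrite !inE.
Qed.

End Gen.

Section Main.
Variable V : finType.
Variable f : V -> nat.
Hypothesis finj : injective f.

Definition goodA (S : {ffun V -> nat}) (T : {set V}) (A : {set V * V}) : bool :=
  [&& [forall p in A, (f p.1 < f p.2)%N],
      [forall i, #|[set p in A | p.1 == i]| == S i] &
      [forall j, #|[set p in A | p.2 == j]| == (j \in T)]].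

Definition crc (p q : V * V) : bool :=
  [&& (f p.1 < f q.1)%N, (f q.1 < f p.2)%N & (f p.2 < f q.2)%N].
Definition nec (p q : V * V) : bool :=
  [&& (f p.1 < f q.1)%N, (f q.1 < f q.2)%N & (f q.2 < f p.2)%N].
Definition crA (A : {set V * V}) : nat :=
  #|[set pq : (V * V) * (V * V) | [&& pq.1 \in A, pq.2 \in A & crc pq.1 pq.2]]|.
Definition neA (A : {set V * V}) : nat :=
  #|[set pq : (V * V) * (V * V) | [&& pq.1 \in A, pq.2 \in A & nec pq.1 pq.2]]|.

Definition hG (S : {ffun V -> nat}) (T : {set V}) (a : V) : int :=
  (#|[set j in T | (f a < f j)%N]|)%:Z - (\sum_(j : V | (f a < f j)%N) S j)%:Z.

Lemma card_sum (X : {set V * V}) (P : pred (V * V)) :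
  #|[set p in X | P p]| = (\sum_(p in X) P p)%N.
Proof.
rewrite -sum_card_set big_mkcondr; apply: eq_bigr => p _; by case: (P p).
Qed.

Section GoodFacts.
Variables (S : {ffun V -> nat}) (T : {set V}) (A : {set V * V}).
Hypothesis gA : goodA S T A.

Lemma gA_lt p : p \in A -> (f p.1 < f p.2)%N.
Proof. by case/and3P: gA => /forall_inP H _ _; apply: H. Qed.

Lemma gA_left i : #|[set p in A | p.1 == i]| = S i.
Proof. by case/and3P: gA => _ /forallP /(_ i) /eqP. Qed.

Lemma gA_right j : #|[set p in A | p.2 == j]| = (j \in T).
Proof. by case/and3P: gA => _ _ /forallP /(_ j) /eqP. Qed.

Lemma gA_inT p : p \in A -> p.2 \in T.
Proof.
move=> pA; have := gA_right p.2; case: (p.2 \in T) => // /eqP; rewrite cards_eq0.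
by move/eqP/setP/(_ p); rewrite !inE pA eqxx.
Qed.

Lemma gA_Spos p : p \in A -> (0 < S p.1)%N.
Proof.
move=> pA; rewrite -gA_left card_gt0; apply/set0Pn; exists p; by rewrite !inE pA eqxx.
Qed.

Lemma gA_uniqR p q : p \in A -> q \in A -> p.2 = q.2 -> p = q.
Proof.
move=> pA qA e; have : (#|[set p0 in A | p0.2 == p.2]| <= 1)%N.
  by rewrite gA_right; case: (_ \in _).
move/card_le1_eqP; apply; by rewrite !inE ?pA ?qA e eqxx.
Qed.

Lemma gA_sum_right (g : V -> nat) : (\sum_(p in A) g p.2 = \sum_(b in T) g b)%N.
Proof.
rewrite (partition_big (fun p : V * V => p.2) predT) //= [RHS]big_mkcond /=.
apply: eq_bigr => b _.
rewrite (eq_bigr (fun _ => g b)); last by move=> p /andP [_ /eqP ->].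
rewrite -[g b]mul1n -big_distrl /= sum_card_set gA_right.
by case: (b \in T); rewrite ?mul1n ?mul0n.
Qed.

End GoodFacts.


Lemma split_double (X Y : {set V * V}) (c : V * V -> V * V -> bool) :
  [disjoint X & Y] ->
  (\sum_(p in X :|: Y) \sum_(q in X :|: Y) c p q =
   \sum_(p in X) \sum_(q in X) c p q + \sum_(p in X) \sum_(q in Y) c p q
   + \sum_(p in Y) \sum_(q in X :|: Y) c p q)%N.
Proof.
move=> d; rewrite bigU_disj //=; congr (_ + _)%N.
by rewrite -big_split /=; apply: eq_bigr => p _; rewrite bigU_disj.
Qed.

Definition Sdel (S : {ffun V -> nat}) (m : V) : {ffun V -> nat} :=
  [ffun a => if a == m then 0%N else S a].
Definition Oset (T : {set V}) (m : V) : {set V} := [set j in T | (f m < f j)%N].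
Definition Mof (m : V) (B : {set V}) : {set V * V} := [set p : V * V | (p.1 == m) && (p.2 \in B)].
Definition Bof (m : V) (A : {set V * V}) : {set V} := [set d | (m, d) \in A].
Definition Rest (m : V) (A : {set V * V}) : {set V * V} := [set p in A | p.1 != m].

Section Step.
Variables (S : {ffun V -> nat}) (m : V) (T : {set V}).
Hypothesis mmax : forall a, (0 < S a)%N -> (f a <= f m)%N.

Lemma sum_M (F : V * V -> nat) B : (\sum_(p in Mof m B) F p = \sum_(d in B) F (m, d))%N.
Proof.
rewrite -[RHS](@big_pred1_eq _ _ addn _ m (fun i => \sum_(d in B) F (i, d))) pair_big_dep /=.
by apply: eq_big => [[i d]|[i d] _] //=; rewrite inE.
Qed.

Lemma M_left B i : #|[set p in Mof m B | p.1 == i]| = ((m == i) * #|B|)%N.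
Proof. by rewrite card_sum sum_M /= sum_nat_const mulnC. Qed.

Lemma M_right B j : #|[set p in Mof m B | p.2 == j]| = (j \in B).
Proof.
rewrite card_sum sum_M /=; case jB: (j \in B).
  by rewrite (bigD1 j) //= eqxx big1 // => d /andP [_ /negbTE ->].
by rewrite big1 // => d dB; apply/eqP; rewrite eqb0; apply: contraFN jB => /eqP <-.
Qed.

Lemma disjM (A' : {set V * V}) B : (forall p, p \in A' -> p.1 != m) -> [disjoint A' & Mof m B].
Proof.
move=> H; rewrite -setI_eq0; apply/eqP/setP => p; rewrite !inE.
by case pA: (p \in A') => //=; rewrite (negbTE (H p pA)).
Qed.

Lemma D1 A : goodA S T A -> (Bof m A \subset Oset T m) && (#|Bof m A| == S m).
Proof.
move=> g; apply/andP; split.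
  apply/subsetP => d; rewrite !inE => dA.
  by rewrite (gA_inT g dA) (gA_lt g dA).
have E : [set p in A | p.1 == m] = [set p in Mof m (Bof m A) | p.1 == m].
  apply/setP => -[i d]; rewrite !inE /=.
  by case: (eqVneq i m) => [->|]; rewrite ?andbT ?andbF.
by rewrite -(gA_left g m) E M_left eqxx mul1n.
Qed.

Lemma D2 (A : {set V * V}) (B : {set V}) : goodA S T A -> Bof m A = B -> Rest m A :|: Mof m B = A.
Proof.
move=> g <-; apply/setP => -[i d]; rewrite !inE /=.
by case: eqP => [->|]; rewrite ?andbT ?andbF ?orbF.
Qed.

Lemma noM_of (A' : {set V * V}) (B : {set V}) : goodA (Sdel S m) (T :\: B) A' -> forall p, p \in A' -> p.1 != m.
Proof.
move=> g p pA; have := gA_Spos g pA; rewrite ffunE.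
by case: eqP.
Qed.

Lemma ltm_of (A' : {set V * V}) (B : {set V}) : goodA (Sdel S m) (T :\: B) A' -> forall p, p \in A' -> (f p.1 < f m)%N.
Proof.
move=> g p pA; have := gA_Spos g pA; rewrite ffunE.
case: eqP => // /eqP pm Sp.
rewrite ltn_neqAle mmax // andbT; apply: contra pm => /eqP /finj ->; by [].
Qed.

Lemma D3 (A' : {set V * V}) (B : {set V}) : B \subset Oset T m -> #|B| = S m ->
  (goodA S T (A' :|: Mof m B) && (Bof m (A' :|: Mof m B) == B))
    && (Rest m (A' :|: Mof m B) == A') = goodA (Sdel S m) (T :\: B) A'.
Proof.
move=> sB cB.
have sBT : B \subset T by apply: subset_trans sB _; apply/subsetP => j; rewrite inE => /andP [].
apply/idP/idP.
  case/andP => /andP [g /eqP eB] /eqP eR.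
  have noM : forall p, p \in A' -> p.1 != m by move=> p; rewrite -eR inE => /andP [].
  have dj := disjM B noM.
  apply/and3P; split.
  - by apply/forall_inP => p pA; apply: (gA_lt g); rewrite inE pA.
  - apply/forallP => i; have := gA_left g i; rewrite card_setU_pred // M_left ffunE.
    case: (eqVneq i m) => [-> | ne]; last first.
      by rewrite mul0n addn0 => ->.
    by rewrite mul1n cB => /eqP; rewrite -{2}(add0n (S m)) eqn_add2r.
  - apply/forallP => j; have := gA_right g j; rewrite card_setU_pred // M_right !inE.
    case jB: (j \in B) => /=; last by rewrite addn0 => ->.
    by rewrite (subsetP sBT j jB) addn1 /= => -[->].
move=> g.
have noM := noM_of g.
have dj := disjM B noM.
have -> : Bof m (A' :|: Mof m B) = B.
  apply/setP => d; rewrite !inE /= eqxx /=.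
  by case mA: ((m, d) \in A') => //; move: (noM _ mA); rewrite eqxx.
have -> : Rest m (A' :|: Mof m B) = A'.
  apply/setP => p; rewrite !inE.
  case pA: (p \in A') => /=; first by rewrite noM.
  by case: (p.1 == m); rewrite ?andbF.
rewrite !eqxx !andbT.
apply/and3P; split.
- apply/forall_inP => p; rewrite !inE => /orP [pA|/andP [/eqP pm pB]].
    exact: (gA_lt g).
  by move: (subsetP sB _ pB); rewrite inE pm => /andP [].
- apply/forallP => i; rewrite card_setU_pred // M_left (gA_left g i) ffunE.
  case: (eqVneq i m) => [-> | ne]; first by rewrite mul1n cB.
  by rewrite mul0n addn0.
- apply/forallP => j; rewrite card_setU_pred // M_right (gA_right g j) !inE.
  case jB: (j \in B) => /=; last by rewrite addn0.
  by rewrite (subsetP sBT j jB).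
Qed.

Lemma D4 (A' : {set V * V}) (B : {set V}) :
  goodA (Sdel S m) (T :\: B) A' -> B \subset Oset T m ->
  crA (A' :|: Mof m B) = (crA A' + invc f (Oset T m) B)%N /\
  neA (A' :|: Mof m B) = (neA A' + coinvc f (Oset T m) B)%N.
Proof.
move=> g sB.
have noM := noM_of g; have ltm := ltm_of g; have dj := disjM B noM.
have key : forall q, q \in A' :|: Mof m B -> (f q.1 <= f m)%N.
  move=> q; rewrite !inE => /orP [qA|/andP [/eqP -> _]] //.
  exact: ltnW (ltm q qA).
have sBO : forall d, d \in B -> (f m < f d)%N.
  by move=> d dB; move: (subsetP sB d dB); rewrite inE => /andP [].
have Mrow : forall c : V * V -> V * V -> bool,
    (forall p q, (c p q -> f p.1 < f q.1)%N) ->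
    (\sum_(p in Mof m B) \sum_(q in A' :|: Mof m B) c p q = 0)%N.
  move=> c Hc; apply: big1 => p; rewrite inE => /andP [/eqP pm _].
  apply: big1 => q qU; apply/eqP; rewrite eqb0; apply/negP => /Hc.
  by rewrite pm ltnNge key.
have sumT : forall g0 : V -> nat, (forall b, ~~ (f m < f b)%N -> g0 b = 0%N) ->
    (\sum_(b in T :\: B) g0 b = \sum_(b in Oset T m :\: B) g0 b)%N.
  move=> g0 H; rewrite (bigID (fun b => (f m < f b)%N)) /=.
  rewrite [X in (_ + X)%N]big1 ?addn0; last by move=> b /andP [_ /H].
  by apply: eq_bigl => b; rewrite !inE andbA andbC andbA.
split.
  rewrite /crA !card_pairs split_double // Mrow ?addn0; last by move=> p q /and3P [].
  congr (_ + _)%N.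
  rewrite (eq_bigr (fun p => \sum_(d in B) ((f m < f p.2) && (f p.2 < f d)))%N); last first.
    by move=> p pA; rewrite sum_M; apply: eq_bigr => d _; rewrite /crc /= (ltm p pA).
  rewrite (gA_sum_right g (fun b => \sum_(d in B) ((f m < f b) && (f b < f d)))%N).
  rewrite sumT; last by move=> b /negbTE mb; apply: big1 => d _; rewrite mb.
  by apply: eq_bigr => b; rewrite !inE => /andP [_ /andP [_ mb]]; apply: eq_bigr => d _; rewrite mb.
rewrite /neA !card_pairs split_double // Mrow ?addn0; last by move=> p q /and3P [].
congr (_ + _)%N.
rewrite (eq_bigr (fun p => \sum_(d in B) (f d < f p.2))%N); last first.
  by move=> p pA; rewrite sum_M; apply: eq_bigr => d dB; rewrite /nec /= (ltm p pA) (sBO d dB).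
rewrite (gA_sum_right g (fun b => \sum_(d in B) (f d < f b))%N).
rewrite sumT //.
move=> b mb; apply: big1 => d dB; apply/eqP; rewrite eqb0 -leqNgt.
by apply: leq_trans (ltnW (sBO d dB)); rewrite leqNgt.
Qed.

End Step.


Section MainThm.
Variable R : fieldType.
Variables x y : R.
Local Open Scope ring_scope.
Hypotheses (x0 : x != 0) (y0 : y != 0)
  (qk : forall k, (0 < k)%N -> (x / y) ^+ k != 1).

Definition Gfac (S : {ffun V -> nat}) (T : {set V}) (a : V) : R :=
  y ^ ((S a)%:Z * hG S T a - (S a)%:Z ^+ 2) * qbinom (hG S T a) (S a) (x / y).

Definition MainStmt (S : {ffun V -> nat}) (T : {set V}) :=
  \sum_(A | goodA S T A) x ^+ crA A * y ^+ neA A = \prod_(a | (0 < S a)%N) Gfac S T a.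

Lemma crA0 : crA set0 = 0%N.
Proof. by rewrite /crA card_pairs big_set0. Qed.
Lemma neA0 : neA set0 = 0%N.
Proof. by rewrite /neA card_pairs big_set0. Qed.

Lemma main_base (S : {ffun V -> nat}) (T : {set V}) : (forall a, S a = 0%N) -> #|T| = (\sum_i S i)%N -> MainStmt S T.
Proof.
move=> S0 cT.
have T0 : T = set0.
  apply/eqP; rewrite -cards_eq0 cT; apply/eqP; apply: big1 => i _; exact: S0.
rewrite /MainStmt big_pred0; last by move=> a; rewrite S0.
rewrite (big_pred1 set0); first by rewrite crA0 neA0 !expr0 mulr1.
move=> A /=; apply/idP/idP.
  move=> g; apply/eqP/setP => p; rewrite inE; apply/negbTE/negP => pA.
  by have := gA_Spos g pA; rewrite S0.
move/eqP => ->; apply/and3P; split.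
- by apply/forall_inP => p; rewrite inE.
- apply/forallP => i; rewrite S0; apply/eqP; apply/eqP; rewrite cards_eq0; apply/eqP/setP => p.
  by rewrite !inE.
- apply/forallP => j; rewrite T0 inE; apply/eqP/eqP; rewrite cards_eq0; apply/eqP/setP => p.
  by rewrite !inE.
Qed.

Lemma hG_del (S : {ffun V -> nat}) (T B : {set V}) (m a : V) :
  B \subset Oset T m -> #|B| = S m -> (f a < f m)%N ->
  hG (Sdel S m) (T :\: B) a = hG S T a.
Proof.
move=> sB cB am.
have sBT : B \subset T by apply: subset_trans sB _; apply/subsetP => j; rewrite inE => /andP [].
have fB : forall d, d \in B -> (f a < f d)%N.
  move=> d dB; move: (subsetP sB d dB); rewrite inE => /andP [_]; exact: ltn_trans.
have E1 : #|[set j in T | (f a < f j)%N]| = (#|[set j in T :\: B | (f a < f j)%N]| + #|B|)%N.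
  have eT : T = (T :\: B) :|: B.
    apply/setP => j; rewrite !inE; case jB: (j \in B) => /=.
      by rewrite (subsetP sBT j jB).
    by rewrite orbF.
  rewrite {1}eT card_setU_pred; last first.
    by rewrite -setI_eq0; apply/eqP/setP => j; rewrite !inE; case: (j \in B); rewrite ?andbF.
  congr (_ + _)%N; apply: eq_card => j; rewrite inE; case jB: (j \in B) => //=; by rewrite fB.
have E2 : (\sum_(j : V | (f a < f j)%N) S j = \sum_(j : V | (f a < f j)%N) Sdel S m j + S m)%N.
  rewrite (bigD1 m) //= [in RHS](bigD1 m) //= ffunE eqxx add0n addnC; congr (_ + _)%N.
  by apply: eq_bigr => i /andP [_ /negbTE jm]; rewrite ffunE jm.
rewrite /hG E1 E2 -cB !PoszD; ring.
Qed.

Lemma main_all : forall (S : {ffun V -> nat}) (T : {set V}),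
  #|T| = (\sum_i S i)%N -> MainStmt S T.
Proof.
suff H : forall k (S : {ffun V -> nat}) (T : {set V}),
    (\sum_i S i <= k)%N -> #|T| = (\sum_i S i)%N -> MainStmt S T.
  by move=> S T; apply: H (leqnn _).
elim=> [|k IH] S T Sk cT.
  apply: main_base cT => a; apply/eqP; rewrite -leqn0.
  by apply: leq_trans Sk; rewrite (bigD1 a) //= leq_addr.
case: (pickP (fun a => (0 < S a)%N)) => [a0 Sa0 | S0]; last first.
  by apply: main_base cT => a; have := S0 a; rewrite lt0n => /negbFE /eqP.
case: (@arg_maxnP _ a0 (fun a => (0 < S a)%N) f Sa0) => m Sm mmax0.
have mmax : forall a, (0 < S a)%N -> (f a <= f m)%N := mmax0.
set O := Oset T m; set r := S m.
set P0 := \prod_(a | (0 < S a)%N && (a != m)) Gfac S T a.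
rewrite /MainStmt (partition_big (Bof m) (fun B => (B \subset O) && (#|B| == r))); last first.
  by move=> A g; exact: (D1 m g).
rewrite (eq_bigr (fun B => x ^+ invc f O B * y ^+ coinvc f O B * P0)); last first.
  move=> B /andP [sB /eqP cB].
  rewrite (reindex_onto (fun A' => A' :|: Mof m B) (Rest m)); last first.
    by move=> A /andP [g /eqP eB]; apply: D2 g eB.
  rewrite (eq_bigl (fun A' => goodA (Sdel S m) (T :\: B) A')); last first.
    by move=> A'; apply: D3.
  rewrite (eq_bigr (fun A' => x ^+ invc f O B * y ^+ coinvc f O B * (x ^+ crA A' * y ^+ neA A'))); last first.
    move=> A' g; have [-> ->] := D4 mmax g sB.
    by rewrite !exprD; ring.
  rewrite -big_distrr /=; congr (_ * _).
  have sBT : B \subset T by apply: subset_trans sB _; apply/subsetP => j; rewrite inE => /andP [].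
  have sumdel : (\sum_i Sdel S m i + r = \sum_i S i)%N.
    rewrite (bigD1 m) //= [in RHS](bigD1 m) //= ffunE eqxx add0n addnC; congr (_ + _)%N.
    by apply: eq_bigr => j /negbTE jm; rewrite ffunE jm.
  have cT' : #|T :\: B| = (\sum_i Sdel S m i)%N.
    rewrite cardsD (setIidPr sBT) cT -sumdel cB; lia.
  have Sk' : (\sum_i Sdel S m i <= k)%N by move: Sk Sm; rewrite -sumdel /r; lia.
  rewrite (IH _ _ Sk' cT').
  apply: eq_big => a.
    by rewrite ffunE; case: (eqVneq a m) => [->|ne] /=; rewrite ?ltnn ?andbF ?andbT.
  rewrite ffunE; case: (eqVneq a m) => // am Sa.
  have fam : (f a < f m)%N.
    rewrite ltn_neqAle mmax // andbT; apply: contra am => /eqP /finj ->; by [].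
  by rewrite /Gfac ffunE (negbTE am) hG_del.
rewrite -big_distrl /=.
have -> : \sum_(B : {set V} | (B \subset O) && (#|B| == r)) x ^+ invc f O B * y ^+ coinvc f O B
    = Lsum f x y O r by [].
rewrite (Lsum_closed finj x0 y0 qk) [RHS](bigD1 m) //=; congr (_ * _).
have hGm : hG S T m = Posz #|O|.
  rewrite /hG big1 ?subr0 // => j mj; apply/eqP; rewrite -leqn0 leqNgt.
  by apply/negP => /mmax; rewrite leqNgt mj.
by rewrite /Gfac hGm Kint.
Qed.

End MainThm.

End Main.


Section Bridge.
Variable n : nat.
Local Notation V := ('I_n.+1).

Lemma ismin_uniq (i j : V) (E : {set V}) : ismin i E -> ismin j E -> i = j.
Proof.
case/andP => iE /forall_inP Hi /andP [jE /forall_inP Hj].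
by apply/val_inj/eqP; rewrite eqn_leq Hi // Hj.
Qed.

Section LPfacts.
Variable P : {set {set V}}.
Hypothesis lP : linked_partition P.

Lemma lp_nd (E F : {set V}) (i : V) : E \in P -> F \in P -> E != F -> i \in E -> i \in F ->
  (ismin i E && (1 < #|E|)%N && ~~ ismin i F) || (ismin i F && (1 < #|F|)%N && ~~ ismin i E).
Proof.
move=> EP FP EF iE iF; case/and3P: lP => _ _ /forall_inP /(_ E EP) /forall_inP /(_ F FP).
by rewrite EF /= => /forall_inP; apply; rewrite inE iE iF.
Qed.

Lemma lp_min_same (E F : {set V}) (i : V) : E \in P -> F \in P -> ismin i E -> ismin i F -> E = F.
Proof.
move=> EP FP iE iF; apply/eqP; apply/negPn/negP => EF.
have := lp_nd EP FP EF (proj1 (andP iE)) (proj1 (andP iF)).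
by rewrite iE iF !andbF.
Qed.

Lemma lp_ground (E : {set V}) : E \in P -> E \subset ground n.
Proof.
move=> EP; case/and3P: lP => _ /eqP <- _; exact: bigcup_sup.
Qed.

Lemma lp_cover (k : V) : k \in ground n -> exists2 E, E \in P & k \in E.
Proof.
case/and3P: lP => _ /eqP <- _; by move/bigcupP.
Qed.

Lemma lp_hasmin (E : {set V}) : E \in P -> exists a, ismin a E.
Proof.
move=> EP; have [i0 i0E] : exists i0, i0 \in E.
  case/and3P: lP => nP _ _; apply/set0Pn; apply: contraNneq nP => <-; exact: EP.
case: (@arg_minnP _ i0 (fun j => j \in E) (fun j : V => val j) i0E) => a aE amin.
by exists a; apply/andP; split => //; apply/forall_inP => j jE; apply: amin.
Qed.

End LPfacts.


Definition isleft (A : {set V * V}) (j : V) : bool := [exists d, (j, d) \in A].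
Definition isright (A : {set V * V}) (j : V) : bool := [exists c, (c, j) \in A].
Definition blk (A : {set V * V}) (j : V) : {set V} := j |: [set d | (j, d) \in A].
Definition Dset (A : {set V * V}) : {set V} :=
  [set j in ground n | isleft A j || ~~ isright A j].
Definition build (A : {set V * V}) : {set {set V}} := [set blk A j | j in Dset A].

Lemma arcsP (P : {set {set V}}) (i d : V) :
  reflect (exists2 E, E \in P & [&& ismin i E, d \in E & d != i]) ((i, d) \in arcs P).
Proof. by rewrite inE; apply: (iffP exists_inP). Qed.

Section GoodA.
Variables (S : {ffun V -> nat}) (T : {set V}) (A : {set V * V}).
Hypothesis gA : goodA (@nat_of_ord n.+1) S T A.
Hypothesis S0 : S ord0 = 0%N.

Lemma gA_ground p : p \in A -> p.1 \in ground n.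
Proof.
move=> pA; have := gA_Spos gA pA; rewrite inE; apply: contraTneq => ->; by rewrite S0.
Qed.

Lemma blk_min (j : V) : ismin j (blk A j).
Proof.
apply/andP; split; first by rewrite setU11.
apply/forall_inP => k; rewrite !inE => /orP [/eqP ->|jk] //.
exact: ltnW (gA_lt gA jk).
Qed.

Lemma in_blk (j k : V) : (k \in blk A j) = (k == j) || ((j, k) \in A).
Proof. by rewrite !inE. Qed.

Lemma blk_ismin (i j : V) : ismin i (blk A j) -> i = j.
Proof. move=> H; exact: ismin_uniq H (blk_min j). Qed.

Lemma L1 : arcs (build A) = A.
Proof.
apply/setP => -[i d]; apply/arcsP/idP.
  case=> E /imsetP [j _ ->] /and3P [im dE di].
  have ij := blk_ismin im; subst j.
  by move: dE; rewrite in_blk (negbTE di).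
move=> idA; exists (blk A i).
  apply/imsetP; exists i => //; rewrite inE (gA_ground idA) /=.
  by apply/orP; left; apply/existsP; exists d.
rewrite blk_min in_blk idA orbT /=.
by apply: contraTneq (gA_lt gA idA) => ->; rewrite ltnn.
Qed.

Lemma blk_card (j : V) : isleft A j -> (1 < #|blk A j|)%N.
Proof.
case/existsP => d jd; rewrite (cardsD1 j) setU11 add1n ltnS card_gt0.
apply/set0Pn; exists d; rewrite !inE jd orbT andbT.
by apply: contraTneq (gA_lt gA jd) => ->; rewrite ltnn.
Qed.

Lemma blk_notmin (j k : V) : (j, k) \in A -> ~~ ismin k (blk A j).
Proof.
move=> jk; apply/negP => /blk_ismin kj; move: (gA_lt gA jk); by rewrite kj ltnn.
Qed.

Lemma L2 : LP S T (build A).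
Proof.
apply/and3P; split.
- apply/and3P; split.
  + apply/imsetP => -[j _ E]; have := blk_min j; rewrite -E => /andP []; by rewrite inE.
  + apply/eqP/setP => k; apply/bigcupP/idP.
      case=> E /imsetP [j jD ->]; rewrite in_blk => /orP [/eqP ->|jk].
        by move: jD; rewrite inE => /andP [].
      by rewrite inE; apply: contraTneq (gA_lt gA jk) => ->.
    move=> kg; case kD: (k \in Dset A).
      by exists (blk A k); [apply/imsetP; exists k | rewrite setU11].
    move/negbT: kD; rewrite inE kg /= negb_or negbK => /andP [_ /existsP [c ck]].
    exists (blk A c); last by rewrite in_blk ck orbT.
    apply/imsetP; exists c => //; rewrite inE (gA_ground ck) /=.
    by apply/orP; left; apply/existsP; exists k.
  + apply/forall_inP => E /imsetP [i iD ->]; apply/forall_inP => F /imsetP [j jD ->].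
    apply/implyP => EF; apply/forall_inP => k; rewrite inE => /andP [].
    have ij : i != j by apply: contraNneq EF => ->.
    have lft : forall a b : V, a \in Dset A -> (b, a) \in A -> isleft A a.
      move=> a b; rewrite inE => /andP [_ /orP [//|/negP nr]] ba.
      by exfalso; apply: nr; apply/existsP; exists b.
    rewrite !in_blk => /orP [/eqP ki|ik] /orP [/eqP kj|jk].
    * by move: ij; rewrite -ki -kj eqxx.
    * subst k; rewrite blk_min blk_card ?(lft i j) // blk_notmin //.
    * subst k; rewrite orbC blk_min blk_card ?(lft j i) // blk_notmin //.
    * have := gA_uniqR gA ik jk erefl; case=> E'; by move: ij; rewrite E' eqxx.
- apply/forallP => i; rewrite /left_mult L1; apply/eqP; exact: gA_left gA i.
- apply/forallP => j; rewrite /right_mult L1; apply/eqP; exact: gA_right gA j.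
Qed.

End GoodA.

Lemma L3 (S : {ffun V -> nat}) (T : {set V}) (P : {set {set V}}) :
  LP S T P -> goodA (@nat_of_ord n.+1) S T (arcs P).
Proof.
case/and3P => _ HL HR; apply/and3P; split => //.
apply/forall_inP => -[i d] /arcsP [E EP /and3P [/andP [_ /forall_inP im] dE di]].
by rewrite /= ltn_neqAle im // andbT; apply: contra di => /eqP/val_inj ->.
Qed.

Section L4s.
Variable P : {set {set V}}.
Hypothesis lP : linked_partition P.
Local Notation A := (arcs P).

Lemma blkE (E : {set V}) (a : V) : E \in P -> ismin a E -> blk A a = E.
Proof.
move=> EP aE; apply/setP => k; rewrite in_blk; apply/idP/idP.
  case/orP => [/eqP ->|/arcsP [F FP /and3P [aF kF _]]]; first by case/andP: aE.
  by rewrite (lp_min_same lP EP FP aE aF).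
move=> kE; case: (eqVneq k a) => //= ka; apply/arcsP; exists E => //.
by rewrite aE kE ka.
Qed.

Lemma minD (E : {set V}) (a : V) : E \in P -> ismin a E -> a \in Dset A.
Proof.
move=> EP aE; rewrite inE (subsetP (lp_ground lP EP)) /=; last by case/andP: aE.
apply/orP; case: (boolP (isright A a)) => [/existsP [c /arcsP [F FP /and3P [cF aF ac]]]|]; last by right.
left.
have EF : E != F.
  by apply: contra ac => /eqP EF; subst F; rewrite (ismin_uniq aE cF).
have aE' : a \in E by case/andP: aE.
have := lp_nd lP EP FP EF aE' aF.
rewrite aE andbF orbF /= => /andP [cE _].
have [e eE ea] : exists2 e, e \in E & e != a.
  move: cE; rewrite (cardsD1 a) aE' add1n ltnS card_gt0 => /set0Pn [e].
  by rewrite !inE => /andP [ea eE]; exists e.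
by apply/existsP; exists e; apply/arcsP; exists E => //; rewrite aE eE ea.
Qed.

Lemma L4 : build A = P.
Proof.
apply/setP => E; apply/imsetP/idP.
  case=> j; rewrite inE => /andP [jg jD] ->.
  have [F FP jF] := lp_cover lP jg.
  have [a aF] := lp_hasmin lP FP.
  case: (eqVneq j a) => [->|ja]; first by rewrite (blkE FP aF).
  have : isright A j by apply/existsP; exists a; apply/arcsP; exists F => //; rewrite aF jF ja.
  move=> rj; move: jD; rewrite rj orbF => /existsP [d /arcsP [G GP /and3P [jG _ _]]].
  by rewrite (blkE GP jG).
move=> EP; have [a aE] := lp_hasmin lP EP.
by exists a; [exact: minD EP aE | rewrite (blkE EP aE)].
Qed.

End L4s.

End Bridge.


Local Open Scope ring_scope.

Lemma sym_fac (R : fieldType) (x y : R) : x != 0 -> y != 0 ->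
  (forall k, (0 < k)%N -> (x / y) ^+ k != 1) -> forall (h : int) (r : nat),
  x ^ ((r%:Z) * h - (r%:Z) ^+ 2) * qbinom h r (y / x) =
  y ^ ((r%:Z) * h - (r%:Z) ^+ 2) * qbinom h r (x / y).
Proof.
move=> x0 y0 qk [h|h] r; last by rewrite /qbinom !mulr0.
by rewrite !Kint (Kf_sym x0 y0 qk).
Qed.

Unset Implicit Arguments. Set Strict Implicit. Set Printing Implicit Defensive.

Theorem theorem3p6 (R : fieldType) (n : nat) (S : {ffun 'I_n.+1 -> nat})
  (T : {set 'I_n.+1}) (x y : R) :
  (0 < n)%N ->
  S ord0 = 0%N ->
  T \subset ground n ->
  #|T| = (\sum_(i : 'I_n.+1) S i)%N ->
  x != 0 -> y != 0 -> (forall k : nat, (0 < k)%N -> (x / y) ^+ k != 1) ->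
  (\sum_(P : {set {set 'I_n.+1}} | LP S T P) x ^+ cr2 P * y ^+ ne2 P
     = \prod_(a : 'I_n.+1 | (0 < S a)%N)
         (y ^ ((S a)%:Z * hfun S T a - (S a)%:Z ^+ 2) * qbinom (hfun S T a) (S a) (x / y)))
  /\
  (\sum_(P : {set {set 'I_n.+1}} | LP S T P) x ^+ ne2 P * y ^+ cr2 P
     = \prod_(a : 'I_n.+1 | (0 < S a)%N)
         (y ^ ((S a)%:Z * hfun S T a - (S a)%:Z ^+ 2) * qbinom (hfun S T a) (S a) (x / y))).
Proof.
move=> _ S0 _ cT x0 y0 qk.
have bridge : forall F : {set 'I_n.+1 * 'I_n.+1} -> R,
    \sum_(P : {set {set 'I_n.+1}} | LP S T P) F (arcs P)
    = \sum_(A | goodA (@nat_of_ord n.+1) S T A) F A.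
  move=> F; rewrite [RHS](reindex_onto (@arcs n) (@build n)); last first.
    by move=> A g; apply: L1 g S0.
  apply: eq_bigl => P; apply/idP/idP.
    move=> lp; have lpP : linked_partition P by case/and3P: lp.
    by rewrite (L3 lp) (L4 lpP) eqxx.
  by case/andP => g /eqP e; rewrite -e; apply: L2 g S0.
have fi : injective (@nat_of_ord n.+1) := @ord_inj n.+1.
split.
  have E1 := bridge (fun A => x ^+ crA (@nat_of_ord n.+1) A * y ^+ neA (@nat_of_ord n.+1) A).
  apply: etrans E1 _.
  exact: (main_all fi x0 y0 qk cT).
have E1 := bridge (fun A => x ^+ neA (@nat_of_ord n.+1) A * y ^+ crA (@nat_of_ord n.+1) A).
apply: etrans E1 _.
have qk' := qk_swap x0 y0 qk.
have := main_all fi y0 x0 qk' cT; rewrite /MainStmt => E2.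
rewrite (eq_bigr (fun A => y ^+ crA (@nat_of_ord n.+1) A * x ^+ neA (@nat_of_ord n.+1) A)); last first.
  by move=> A _; rewrite mulrC.
rewrite E2; apply: eq_bigr => a _.
exact: (sym_fac x0 y0 qk).
Qed.
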